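(* Let $\mathbf L$ be a locally compact non-discrete non-Archimedean field and let $\tilde\Gamma_{\mathbf L}=\{|x|_{\mathbf L}:x\in\mathbf L\}\subset[0,\infty)$. For every ultrametric space $(X,\rho)$ there exists an ultrametric $\rho'$ on $X$ equivalent to $\rho$ such that $\rho'(X,X)\subset\tilde\Gamma_{\mathbf L}$.
   Context: An ultrametric is a metric satisfying $\rho(x,y)\le\max(\rho(x,z),\rho(z,y))$. *)

(* Defs.v *)
From Stdlib Require Import Reals List.
From mathcomp Require Import all_boot all_algebra.
Set Implicit Arguments.
Unset Strict Implicit.
Open Scope R_scope.

Section Metric.
Variable X : Type.

Record is_ultrametric (d : X -> X -> R) : Prop := {
  um_nonneg : forall x y, 0 <= d x y;
  um_eq0 : forall x y, d x y = 0 <-> x = y;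
  um_sym : forall x y, d x y = d y x;
  um_ultra : forall x y z, d x y <= Rmax (d x z) (d z y)
}.

Definition open_in (d : X -> X -> R) (U : X -> Prop) : Prop :=
  forall x, U x -> exists e, 0 < e /\ forall y, d x y < e -> U y.

Definition equiv_metric (d d' : X -> X -> R) : Prop :=
  forall U : X -> Prop, open_in d U <-> open_in d' U.

Definition compact_in (d : X -> X -> R) (A : X -> Prop) : Prop :=
  forall (I : Type) (U : I -> X -> Prop),
    (forall i, open_in d (U i)) ->
    (forall x, A x -> exists i, U i x) ->
    exists s : list I, forall x, A x -> exists i, In i s /\ U i x.

Definition locally_compact (d : X -> X -> R) : Prop :=
  forall x, exists V C : X -> Prop,
    open_in d V /\ V x /\ (forall y, V y -> C y) /\ compact_in d C.

Definition discrete_top (d : X -> X -> R) : Prop :=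
  forall x, open_in d (fun y => y = x).
End Metric.

Record is_nonarch_abs (K : fieldType) (a : K -> R) : Prop := {
  abs_nonneg : forall x, 0 <= a x;
  abs_eq0 : forall x, a x = 0 <-> x = GRing.zero;
  abs_mul : forall x y, a (GRing.mul x y) = a x * a y;
  abs_ultra : forall x y, a (GRing.add x y) <= Rmax (a x) (a y)
}.

Definition abs_dist (K : fieldType) (a : K -> R) : K -> K -> R :=
  fun x y => a (GRing.add x (GRing.opp y)).

Definition lc_nondiscrete_nonarch_field (K : fieldType) (a : K -> R) : Prop :=
  is_nonarch_abs a /\ locally_compact (abs_dist a) /\ ~ discrete_top (abs_dist a).

Definition value_set (K : fieldType) (a : K -> R) : R -> Prop :=
  fun r => exists x : K, a x = r.

(* Main.v *)
Require Import Defs.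
From Stdlib Require Import Reals Lra Lia Classical.
From mathcomp Require Import all_boot all_algebra.
Open Scope R_scope.

Lemma exp_le_mono (a b : R) : a <= b -> exp a <= exp b.
Proof. intros [H|H]; [left; apply exp_increasing; exact H | subst; lra]. Qed.

Section F.
Variable q : R.
Hypothesis q0 : 0 < q.
Hypothesis q1 : q < 1.

Definition kf (r : R) : Z := Z.sub (up (ln r / ln q)) 1.
Definition ff (r : R) : R := Rpower q (IZR (kf r)).
Definition gf (r : R) : R := if Rle_dec r 0 then 0 else ff r.

Lemma lnq_neg : ln q < 0.
Proof. rewrite <- ln_1. apply ln_increasing; lra. Qed.

Lemma kf_bounds r : IZR (kf r) <= ln r / ln q < IZR (kf r) + 1.
Proof.
  unfold kf. destruct (archimed (ln r / ln q)) as [H1 H2].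
  rewrite minus_IZR. simpl. lra.
Qed.

Lemma ff_ge r : 0 < r -> r <= ff r.
Proof.
  intros hr. unfold ff, Rpower. pattern r at 1; rewrite <- (exp_ln r hr).
  apply exp_le_mono. destruct (kf_bounds r) as [A B].
  assert (E : ln r = (ln r / ln q) * ln q) by (field; pose proof lnq_neg; lra).
  pose proof lnq_neg. rewrite {1}E. nra.
Qed.

Lemma ff_lt r : 0 < r -> q * ff r < r.
Proof.
  intros hr. unfold ff, Rpower. rewrite -{2}(exp_ln r hr).
  rewrite -{1}(exp_ln q q0). rewrite <- exp_plus.
  apply exp_increasing. destruct (kf_bounds r) as [A B].
  assert (E : ln r = (ln r / ln q) * ln q) by (field; pose proof lnq_neg; lra).
  pose proof lnq_neg. rewrite E. nra.
Qed.

Lemma ff_pos r : 0 < ff r.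
Proof. unfold ff, Rpower. apply exp_pos. Qed.

Lemma ff_mono a b : 0 < a -> a <= b -> ff a <= ff b.
Proof.
  intros ha hab. unfold ff, Rpower. apply exp_le_mono.
  pose proof lnq_neg.
  destruct (kf_bounds a) as [A1 A2]. destruct (kf_bounds b) as [B1 B2].
  assert (Hl : ln a <= ln b).
  { destruct hab as [h|h]; [left; apply ln_increasing; lra | subst; lra]. }
  assert (Ht : ln b / ln q <= ln a / ln q).
  { unfold Rdiv. assert (/ ln q < 0) by (apply Rinv_lt_0_compat; lra). nra. }
  assert (Hk : Z.lt (kf b) (Z.add (kf a) 1)).
  { apply lt_IZR. rewrite plus_IZR. simpl. lra. }
  assert (Hk' : IZR (kf b) <= IZR (kf a)) by (apply IZR_le; lia).
  clear -Hk' H. nra.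
Qed.

Lemma gf_mono a b : 0 <= a -> a <= b -> gf a <= gf b.
Proof.
  intros ha hab. unfold gf.
  destruct (Rle_dec a 0); destruct (Rle_dec b 0). all: cbn [is_left].
  - lra.
  - left; apply ff_pos.
  - lra.
  - apply ff_mono; lra.
Qed.
End F.

Lemma abs_one (L : fieldType) (a : L -> R) (H : is_nonarch_abs a) : a (1%R) = 1.
Proof.
  pose proof (abs_mul H 1%R 1%R) as E. rewrite GRing.mulr1 in E.
  assert (a 1%R <> 0).
  { intro h. apply (proj1 (abs_eq0 H 1%R)) in h. move: (@GRing.oner_neq0 L); rewrite h; rewrite eqxx; discriminate. }
  assert (a 1%R * (a 1%R - 1) = 0) by lra.
  apply Rmult_integral in H1. lra.
Qed.

Lemma abs_pow (L : fieldType) (a : L -> R) (H : is_nonarch_abs a) (p : L) n :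
  a (GRing.exp p n) = (a p) ^ n.
Proof.
  induction n as [|n IH].
  - simpl. rewrite GRing.expr0. apply abs_one; auto.
  - rewrite GRing.exprS (abs_mul H) IH. simpl. reflexivity.
Qed.

Theorem lemma2p2 (L : fieldType) (absL : L -> R)
  (HL : lc_nondiscrete_nonarch_field absL)
  (X : Type) (rho : X -> X -> R) (Hrho : is_ultrametric rho) :
  exists rho' : X -> X -> R,
    is_ultrametric rho' /\ equiv_metric rho rho' /\
    forall x y : X, value_set absL (rho' x y).
Proof.
  destruct HL as [HA [_ HND]].
  assert (Hpi : exists p : L, 0 < absL p < 1).
  { apply NNPP; intro Hn. apply HND. intros x y Hy. exists 1. split; [lra|].
    intros z Hz. apply NNPP; intro Hzx.
    apply Hn. exists (GRing.add y (GRing.opp z)). split; [|exact Hz].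
    destruct (abs_nonneg HA (GRing.add y (GRing.opp z))) as [h|h]; [exact h|].
    exfalso. subst y. apply Hzx. symmetry.
    symmetry in h. apply (proj1 (abs_eq0 HA _)) in h. apply GRing.subr0_eq. exact h. }
  destruct Hpi as [p [hp0 hp1]].
  set (q := absL p).
  assert (hq0 : 0 < q) by exact hp0.
  assert (hq1 : q < 1) by exact hp1.
  assert (pnz : p <> 0%R).
  { intro h. rewrite <- (proj2 (abs_eq0 HA p) h) in hp0. fold q in hp0. lra. }
  assert (Hval : forall k : Z, value_set absL (Rpower q (IZR k))).
  { intro k. destruct (Z.le_gt_cases 0 k) as [hk|hk].
    - exists (GRing.exp p (Z.to_nat k)). rewrite abs_pow; auto.
      rewrite <- Rpower_pow; [|exact hp0]. rewrite INR_IZR_INZ. f_equal. f_equal. lia.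
    - exists (GRing.exp (GRing.inv p) (Z.to_nat (Z.opp k))). rewrite abs_pow; auto.
      assert (hi : absL (GRing.inv p) = / q).
      { assert (E := abs_mul HA (GRing.inv p) p).
        rewrite GRing.mulVf in E; [| apply/eqP; exact pnz].
        rewrite abs_one in E; auto. fold q in E. assert (qn : q <> 0) by (unfold q; lra). apply (Rmult_eq_reg_r q); [rewrite Rinv_l; [symmetry; exact E | exact qn] | exact qn]. }
      rewrite hi. rewrite <- Rpower_pow; [|apply Rinv_0_lt_compat; lra].
      unfold Rpower. rewrite ln_Rinv; [|lra]. f_equal.
      rewrite INR_IZR_INZ. replace (Z.of_nat (Z.to_nat (Z.opp k))) with (Z.opp k) by lia. rewrite opp_IZR. ring. }
  set (g := gf q).
  assert (g0 : forall r, r <= 0 -> g r = 0).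
  { intros r h. unfold g, gf. destruct (Rle_dec r 0); cbn [is_left]; [reflexivity|lra]. }
  assert (gp : forall r, 0 < r -> g r = ff q r).
  { intros r h. unfold g, gf. destruct (Rle_dec r 0); cbn [is_left]; [lra|reflexivity]. }
  destruct Hrho as [N E S U].
  exists (fun x y => g (rho x y)). split; [|split].
  - constructor.
    + intros x y. destruct (N x y) as [h|h].
      * rewrite gp; [left; apply ff_pos | exact h].
      * rewrite g0; lra.
    + intros x y. split.
      * intro h. apply E. destruct (N x y) as [h'|h']; [|lra].
        rewrite gp in h; [|exact h']. pose proof (ff_pos q (rho x y)). lra.
      * intro h. apply E in h. rewrite g0; lra.
    + intros x y. rewrite S. reflexivity.
    + intros x y z. unfold Rmax. specialize (U x y z). unfold Rmax in U.
      destruct (Rle_dec (rho x z) (rho z y));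
      destruct (Rle_dec (g (rho x z)) (g (rho z y))).
      * apply gf_mono; auto.
      * apply Rle_trans with (g (rho z y)); [apply gf_mono; auto | lra].
      * apply Rle_trans with (g (rho x z)); [apply gf_mono; auto | lra].
      * apply gf_mono; auto.
  - intro V. split.
    + intros HV x Vx. destruct (HV x Vx) as [e [he He]]. exists e. split; [exact he|].
      intros y hy. apply He. destruct (N x y) as [h|h].
      * rewrite gp in hy; [|exact h]. pose proof (ff_ge q hq0 hq1 (rho x y) h). lra.
      * lra.
    + intros HV x Vx. destruct (HV x Vx) as [e [he He]]. exists (q * e). split; [nra|].
      intros y hy. apply He. destruct (N x y) as [h|h].
      * rewrite gp; [|exact h]. pose proof (ff_lt q hq0 hq1 (rho x y) h).
        assert (q * ff q (rho x y) < q * e) by lra.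
        apply Rmult_lt_reg_l with q; lra.
      * rewrite g0; lra.
  - intros x y. destruct (N x y) as [h|h].
    + rewrite gp; [|exact h]. apply Hval.
    + rewrite g0; [|lra]. exists 0%R. apply (abs_eq0 HA). reflexivity.
Qed.
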